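(* Let $(T^{E}_{m},T^{\mathbb{K}}_{m})_{m\in M}$ be a generator for $(\mathcal{FV},E)$, let $X$ be a set, $\mathfrak{K}$ a family of sets with $\bigcup_{K\in\mathfrak{K}}K\subset X$ which is closed under finite unions, and $\pi\colon\bigcup_{m\in M}\omega_m\to X$ a map. Suppose $\mathcal{FV}(\Omega,Y)\subset\operatorname{AP}_{\pi,\mathfrak{K}}(\Omega,Y)$ as a linear subspace for $Y\in\{\mathbb{K},E\}$. Then: (1) if for every $u\in\mathcal{FV}(\Omega)\varepsilon E$, $m\in M$, $x\in\omega_m$ one has $S(u)\in\operatorname{dom}T^E_m$ and $T^E_m(S(u))(x)=u(T^{\mathbb{K}}_{m,x})$, then $S(u)\in\operatorname{AP}_{\pi,\mathfrak{K}}(\Omega,E)$ for all $u\in\mathcal{FV}(\Omega)\varepsilon E$; (2) if for every $e'\in E'$, $f\in\mathcal{FV}(\Omega,E)$, $m\in M$ one has $e'\circ f\in\operatorname{dom}T^{\mathbb{K}}_m$ and $T^{\mathbb{K}}_m(e'\circ f)=e'\circ T^E_m(f)$ on $\omega_m$, then $e'\circ f\in\operatorname{AP}_{\pi,\mathfrak{K}}(\Omega,\mathbb{K})$ for all $e'\in E'$ and $f\in\mathcal{FV}(\Omega,E)$.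
   Context: $\mathbb{K}\in\{\mathbb{R},\mathbb{C}\}$, $E$ a non-trivial locally convex Hausdorff space over $\mathbb{K}$ with directed fundamental system of seminorms $(p_\alpha)_{\alpha\in\mathfrak{A}}$. Let $\Omega$ be a non-empty set, $J,M$ non-empty index sets, $(\omega_m)_{m\in M}$ non-empty sets, $\nu_{j,m}\colon\omega_m\to[0,\infty)$ such that for all $m$, $x\in\omega_m$ some $\nu_{j,m}(x)>0$. For $Y\in\{\mathbb{K},E\}$ (for $\mathbb{K}$ only $|\cdot|$), let $\operatorname{AP}(\Omega,Y)\subset Y^\Omega$ be a linear subspace and $T^Y_m\colon\operatorname{dom}T^Y_m\to Y^{\omega_m}$ linear maps on linear subspaces $\operatorname{dom}T^Y_m\subset Y^\Omega$. $\mathcal{FV}(\Omega,Y):=\{f\in\operatorname{AP}(\Omega,Y)\cap\bigcap_m\operatorname{dom}T^Y_m: |f|_{j,m,\alpha}:=\sup_{x\in\omega_m}p_\alpha(T^Y_m(f)(x))\nu_{j,m}(x)<\infty\ \forall j,m,\alpha\}$ with these seminorms; $\mathcal{FV}(\Omega):=\mathcal{FV}(\Omega,\mathbb{K})$, $T^Y_{m,x}(f):=T^Y_m(f)(x)$. Dom-space: Hausdorff, directed seminorms, and for $Y=\mathbb{K}$ all point evaluations $\delta_x$ are in $\mathcal{FV}(\Omega)'$. Generator for $(\mathcal{FV},E)$: $(T^E_m,T^{\mathbb{K}}_m)_{m\in M}$ with $\mathcal{FV}(\Omega)$, $\mathcal{FV}(\Omega,E)$ dom-spaces over the same $J,M,\omega_m,\nu_{j,m}$.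 $\mathcal{FV}(\Omega)\varepsilon E$: continuous linear maps from $\mathcal{FV}(\Omega)'$ (topology of uniform convergence on absolutely convex compact sets) to $E$, with the topology of uniform convergence on equicontinuous sets; $S(u)(x):=u(\delta_x)$. $\operatorname{AP}_{\pi,\mathfrak{K}}(\Omega,Y)$ is the set of $f\in\bigcap_{m}\operatorname{dom}T^Y_m$ such that for all $\varepsilon>0$, $j\in J$, $m\in M$, $\alpha$ there is $K\in\mathfrak{K}$ with (i) $\sup_{x\in\omega_m,\ \pi(x)\notin K}p_\alpha(T^Y_m(f)(x))\nu_{j,m}(x)<\varepsilon$ and (ii) $\{T^Y_m(f)(x)\nu_{j,m}(x): x\in\omega_m,\ \pi(x)\in K\}$ is precompact in $Y$. *)

(* Defs.v *)
From HB Require Import structures.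
From mathcomp Require Import all_boot all_order all_algebra.
From mathcomp Require Import classical_sets reals.
From mathcomp Require Import complex.

Set Implicit Arguments.
Unset Strict Implicit.
Unset Printing Implicit Defensive.
Import Order.TTheory GRing.Theory Num.Theory.
Local Open Scope ring_scope.

Definition RorC (K : numFieldType) : Prop :=
  exists R : realType, K = (R : numFieldType) \/ K = (R[i] : numFieldType).

(* Spaces whose topology is given by a family of seminorms p : A -> V -> K
   (nonnegative values in K; for K = R or C these are the usual real
   seminorms).                                                         *)
Section Seminormed.
Variables (K : numFieldType) (V : lmodType K) (A : Type) (p : A -> V -> K).

Definition seminorm_family : Prop :=
  forall a, (forall x, 0 <= p a x) /\
            (forall x y, p a (x + y) <= p a x + p a y) /\
            (forall (c : K) x, p a (c *: x) = `|c| * p a x).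

Definition directed_family : Prop :=
  forall a1 a2, exists a3 (C : K), 0 < C /\
    forall x, p a1 x <= C * p a3 x /\ p a2 x <= C * p a3 x.

Definition separating_family : Prop :=
  forall x, (forall a, p a x = 0) -> x = 0.

Definition precompact (S : set V) : Prop :=
  forall (n : nat) (as_ : nat -> A) (e : K), 0 < e ->
    exists (N : nat) (z : nat -> V), forall y, S y ->
      exists k, (k < N)%N /\ forall i, (i < n)%N -> p (as_ i) (y - z k) < e.

Definition in_dual (e' : V -> K) : Prop :=
  (forall (c : K) x y, e' (c *: x + y) = c * e' x + e' y) /\
  exists (n : nat) (as_ : nat -> A) (C : K), 0 <= C /\
    forall x (c : K), (forall i, (i < n)%N -> p (as_ i) x <= c) ->
      `|e' x| <= C * c.
End Seminormed.

Definition pK (K : numFieldType) : unit -> K^o -> K := fun _ x => `|(x : K)|.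

(* The sets omega_m are subsets of a common
   type W (so that a map pi on their union is a map on W).  A space Y is
   given by (V, A, p); AP(Omega,Y) is AP; dom T_m is domT m; T_m is T m.  *)
Section FV.
Variables (K : numFieldType) (Omega J M W : Type)
  (omega : M -> set W) (nu : J -> M -> W -> K).
Variables (V : lmodType K) (A : Type) (p : A -> V -> K)
  (AP : set (Omega -> V)) (domT : M -> set (Omega -> V))
  (T : M -> (Omega -> V) -> W -> V).

Definition linear_subspace (S : set (Omega -> V)) : Prop :=
  S (fun _ => 0) /\
  forall (c : K) f g, S f -> S g -> S (fun w => c *: f w + g w).

Definition FV_data_ok : Prop :=
  linear_subspace AP /\ (forall m, linear_subspace (domT m)) /\
  forall m (c : K) f g, domT m f -> domT m g ->
    forall x, omega m x ->
      T m (fun w => c *: f w + g w) x = c *: T m f x + T m g x.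

Definition FVle (j : J) (m : M) (a : A) (f : Omega -> V) (c : K) : Prop :=
  forall x, omega m x -> p a (T m f x) * nu j m x <= c.

Definition FVlt (j : J) (m : M) (a : A) (f : Omega -> V) (e : K) : Prop :=
  exists c, c < e /\ FVle j m a f c.

Definition inFV (f : Omega -> V) : Prop :=
  AP f /\ (forall m, domT m f) /\ forall j m a, exists c, FVle j m a f c.

Definition FV_separating : Prop :=
  forall f, inFV f -> (forall j m a, FVle j m a f 0) -> f = (fun _ => 0).

Definition FV_directed : Prop :=
  forall (i1 i2 : J * M * A), exists (i3 : J * M * A) (C : K), 0 < C /\
    forall f, inFV f -> forall c, FVle i3.1.1 i3.1.2 i3.2 f c ->
      FVle i1.1.1 i1.1.2 i1.2 f (C * c) /\ FVle i2.1.1 i2.1.2 i2.2 f (C * c).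

Variables (X : Type) (pi : W -> X) (Kfrak : set (set X)).

Definition APpi (f : Omega -> V) : Prop :=
  (forall m, domT m f) /\
  forall (e : K), 0 < e -> forall j m a, exists Kc, Kfrak Kc /\
    (exists c, c < e /\
       forall x, omega m x -> ~ Kc (pi x) -> p a (T m f x) * nu j m x <= c) /\
    precompact p [set y | exists x, omega m x /\ Kc (pi x) /\
                                    y = nu j m x *: T m f x].
End FV.

Section Eps.
Variables (K : numFieldType) (Omega J M W : Type)
  (omega : M -> set W) (nu : J -> M -> W -> K)
  (APK : set (Omega -> K^o)) (domTK : M -> set (Omega -> K^o))
  (TK : M -> (Omega -> K^o) -> W -> K^o).

Definition inFVK := inFV omega nu (@pK K) APK domTK TK.
Definition FVleK := FVle omega nu (@pK K) TK.

Definition FVt := {f : Omega -> K^o | inFVK f}.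

Definition in_FVdual (y : FVt -> K) : Prop :=
  (forall (c : K) (f g h : FVt),
     sval h = (fun w => c *: sval f w + sval g w) -> y h = c * y f + y g) /\
  exists (n : nat) (ix : nat -> J * M) (C : K), 0 <= C /\
    forall (f : FVt) (c : K),
      (forall k, (k < n)%N -> FVleK (ix k).1 (ix k).2 tt (sval f) c) ->
      `|y f| <= C * c.

Definition delta (x : Omega) : FVt -> K := fun f => sval f x.
Definition TKx (m : M) (x : W) : FVt -> K := fun f => TK m (sval f) x.

Definition FV_open (U : set FVt) : Prop :=
  forall f, U f -> exists (n : nat) (ix : nat -> J * M) (e : K), 0 < e /\
    forall g : FVt,
      (forall k, (k < n)%N ->
         FVlt omega nu (@pK K) TK (ix k).1 (ix k).2 tt
              (fun w => sval g w - sval f w) e) -> U g.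

Definition FV_compact (B : set FVt) : Prop :=
  forall F : set (set FVt), (forall U, F U -> FV_open U) ->
    (forall f, B f -> exists U, F U /\ U f) ->
    exists (n : nat) (Us : nat -> set FVt), (forall k, (k < n)%N -> F (Us k)) /\
      forall f, B f -> exists k, (k < n)%N /\ Us k f.

Definition abs_convex (B : set FVt) : Prop :=
  forall (a b : K) (f g h : FVt), `|a| + `|b| <= 1 ->
    sval h = (fun w => a *: sval f w + b *: sval g w) -> B f -> B g -> B h.

(* u in FV(Omega) eps E: u is a continuous linear map from FV(Omega)'
   (with the topology of uniform convergence on absolutely convex compact
   subsets of FV(Omega)) to E.  Only the values of u on FV(Omega)' matter. *)
Definition in_eps (E : lmodType K) (AE : Type) (pE : AE -> E -> K)
    (u : (FVt -> K) -> E) : Prop :=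
  (forall (c : K) (y1 y2 : FVt -> K), in_FVdual y1 -> in_FVdual y2 ->
     u (fun f => c * y1 f + y2 f) = c *: u y1 + u y2) /\
  forall a : AE, exists (n : nat) (Bs : nat -> set FVt) (C : K),
    (forall k, (k < n)%N -> abs_convex (Bs k) /\ FV_compact (Bs k)) /\ 0 <= C /\
    forall (y : FVt -> K) (c : K), in_FVdual y ->
      (forall k f, (k < n)%N -> Bs k f -> `|y f| <= c) -> pE a (u y) <= C * c.

Definition Smap (E : lmodType K) (u : (FVt -> K) -> E) : Omega -> E :=
  fun x => u (delta x).
End Eps.

Arguments in_FVdual {K Omega J M W} omega nu APK domTK TK y.
Arguments delta {K Omega J M W} omega nu APK domTK TK x f.
Arguments TKx {K Omega J M W} omega nu APK domTK TK m x f.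
Arguments in_eps {K Omega J M W} omega nu APK domTK TK {E AE} pE u.
Arguments Smap {K Omega J M W} omega nu APK domTK TK {E} u x.

(* Main.v *)
Require Import Defs.
From HB Require Import structures.
From mathcomp Require Import all_boot all_order all_algebra.
From mathcomp Require Import classical_sets reals complex.
From mathcomp Require Import boolp ring.
Import Order.TTheory GRing.Theory Num.Theory.
Local Open Scope ring_scope.
Local Open Scope classical_set_scope.
Set Implicit Arguments.
Unset Strict Implicit.

Lemma half_gt0 (K : numFieldType) (e : K) : 0 < e -> 0 < e / 2.
Proof. by move=> he; rewrite divr_gt0 // ltr0n. Qed.

Lemma dist_tri (K : numFieldType) (a b c : K) (e : K) :
  `|a - b| < e / 2 -> `|c - b| < e / 2 -> `|a - c| < e.
Proof.
move=> h1 h2.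
have -> : a - c = (a - b) + (b - c) by rewrite addrA subrK.
rewrite [e]splitr; apply: (le_lt_trans (ler_normD _ _)).
by apply: ltrD => //; rewrite distrC.
Qed.

Lemma tb_family (K : numFieldType) (W : Type) (S : set W) (x0 : W) (Sx0 : S x0)
  (phi : nat -> W -> K) (L : nat) :
  (forall l, (l < L)%N -> forall e : K, 0 < e -> exists P (c : nat -> K),
     forall x, S x -> exists p, (p < P)%N /\ `|phi l x - c p| < e) ->
  forall e : K, 0 < e -> exists N (xs : nat -> W), (forall k, (k < N)%N -> S (xs k)) /\
    forall x, S x -> exists k, (k < N)%N /\
      forall l, (l < L)%N -> `|phi l x - phi l (xs k)| < e.
Proof.
elim: L => [|L IH] hyp e he.
  exists 1%N, (fun _ => x0); split=> // x Sx; exists 0%N; split=> //.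
have he2 := half_gt0 he.
have [N [xs [Sxs Hxs]]] := IH (fun l hl => hyp l (ltnW hl)) _ he2.
have [P [c Hc]] := hyp L (ltnSn L) _ he2.
pose cell k p x := S x /\ (forall l, (l < L)%N -> `|phi l x - phi l (xs k)| < e / 2)
                   /\ `|phi L x - c p| < e / 2.
pose pick k p := match pselect (exists x, cell k p x) with
                 | left h => proj1_sig (cid h) | right _ => xs k end.
have pickP : forall k p, (exists x, cell k p x) -> cell k p (pick k p).
  move=> k p h; rewrite /pick; case: pselect => [h'|//].
  exact: (proj2_sig (cid h')).
exists (N * P)%N, (fun i => pick (i %/ P)%N (i %% P)%N); split.
  move=> i hi; rewrite /pick; case: pselect => [h'|_].
    by case: (proj2_sig (cid h')).
  apply: Sxs; have hP : (0 < P)%N by move: hi; case: (P) => //; rewrite muln0.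
  by rewrite ltn_divLR.
move=> x Sx.
have [k [hk Hk]] := Hxs x Sx.
have [p [hp Hp]] := Hc x Sx.
have hcell : cell k p x by split.
have [S1 [H1 H2]] := pickP k p (ex_intro _ x hcell).
have hP : (0 < P)%N := leq_ltn_trans (leq0n p) hp.
exists (k * P + p)%N; split.
  rewrite -[(N * P)%N]/(N * P)%N.
  apply: (@leq_trans (k * P + P)%N); first by rewrite ltn_add2l.
  by rewrite -mulSnr leq_mul2r hk orbT.
rewrite divnMDl // divn_small // addn0 modnMDl modn_small //.
rewrite /= in H1 H2.
move=> l; rewrite ltnS leq_eqVlt => /orP [/eqP ->|hl].
  by apply: (dist_tri Hp).
by apply: (dist_tri (Hk l hl) (H1 l hl)).
Qed.

Section Lin.
Variables (K : numFieldType) (Omega M W : Type) (omega : M -> set W)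
  (V : lmodType K) (AP : set (Omega -> V)) (domT : M -> set (Omega -> V))
  (T : M -> (Omega -> V) -> W -> V).
Hypothesis Hd : FV_data_ok omega AP domT T.

Lemma fun_sub_eq (f g : Omega -> V) :
  (fun w => f w - g w) = (fun w => (-1 : K) *: g w + f w).
Proof. by apply: funext => w; rewrite scaleN1r addrC. Qed.

Lemma dom_sub m f g : domT m f -> domT m g -> domT m (fun w => f w - g w).
Proof.
move=> hf hg; rewrite fun_sub_eq.
by case: Hd => _ [Hl _]; case: (Hl m) => _ H; apply: H.
Qed.

Lemma T_sub m f g x : omega m x -> domT m f -> domT m g ->
  T m (fun w => f w - g w) x = T m f x - T m g x.
Proof.
move=> hx hf hg; rewrite fun_sub_eq.
case: Hd => _ [_ H]; rewrite H //.
by rewrite scaleN1r addrC.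
Qed.
End Lin.

Section FVK.
Variables (K : numFieldType) (Omega J M W : Type) (omega : M -> set W)
  (nu : J -> M -> W -> K)
  (APK : set (Omega -> K^o)) (domTK : M -> set (Omega -> K^o))
  (TK : M -> (Omega -> K^o) -> W -> K^o).
Variables (X : Type) (Kfrak : set (set X)) (pi : W -> X).
Hypothesis HdataK : FV_data_ok omega APK domTK TK.
Hypothesis Hnu0 : forall j m x, omega m x -> 0 <= nu j m x.
Hypothesis HAP : forall f, inFV omega nu (@pK K) APK domTK TK f ->
                    APpi omega nu (@pK K) domTK TK pi Kfrak f.
Hypothesis HAP0 : APpi omega nu (@pK K) domTK TK pi Kfrak (fun _ => 0).
Hypothesis Homega : forall m, exists x, omega m x.

Local Notation FT := (FVt omega nu APK domTK TK).

Lemma img_pc (g : Omega -> K^o) j m :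
  APpi omega nu (@pK K) domTK TK pi Kfrak g -> forall e : K, 0 < e ->
  exists P (c : nat -> K), forall x, omega m x ->
    exists p, (p < P)%N /\ `|nu j m x * TK m g x - c p| < e.
Proof.
case=> _ H e he.
have [Kc [_ [[c0 [hc0 Hout]] Hpc]]] := H e he j m tt.
have [N [z Hz]] := Hpc 1%N (fun _ => tt) e he.
exists N.+1, (fun p => if (p < N)%N then z p else 0) => x hx.
case: (pselect (Kc (pi x))) => hK.
  have [k [hk Hk]] := Hz (nu j m x *: TK m g x) (ex_intro _ x (conj hx (conj hK erefl))).
  exists k; split; first by rewrite ltnS ltnW.
  by rewrite hk; have := Hk 0%N isT.
exists N; split => //; rewrite ltnn subr0.
have := Hout x hx hK; rewrite /pK => h.
rewrite normrM (ger0_norm (Hnu0 j hx)) mulrC.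
exact: le_lt_trans h hc0.
Qed.

Lemma FT_dom (h : FT) m : domTK m (sval h).
Proof. by case: (proj2_sig h) => _ [H _]. Qed.
Arguments FT_dom : clear implicits.

Lemma FT_AP (h : FT) : APpi omega nu (@pK K) domTK TK pi Kfrak (sval h).
Proof. exact: HAP (proj2_sig h). Qed.

Definition ball j m (g : FT) (r : K) : set FT := fun h =>
  FVlt omega nu (@pK K) TK j m tt (fun w => sval h w - sval g w) r.

Lemma ball_est j m g r h x : ball j m g r h -> omega m x ->
  `|nu j m x * TK m (sval h) x - nu j m x * TK m (sval g) x| < r.
Proof.
case=> c [hc Hc] hx.
have := Hc x hx; rewrite /pK (T_sub HdataK hx (FT_dom h m) (FT_dom g m)) => H.
rewrite -mulrBr normrM (ger0_norm (Hnu0 j hx)) mulrC.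
exact: le_lt_trans H hc.
Qed.

Lemma ball_center j m g (r : K) : 0 < r -> ball j m g r g.
Proof.
move=> hr; exists 0; split => // x hx.
by rewrite /pK (T_sub HdataK hx (FT_dom g m) (FT_dom g m)) subrr normr0 mul0r.
Qed.

Lemma ball_open j m g r : FV_open (ball j m g r).
Proof.
move=> h [c0 [hc0 Hc0]].
exists 1%N, (fun _ => (j, m)), (r - c0); split; first by rewrite subr_gt0.
move=> g' /(_ 0%N isT) /= [c1 [hc1 Hc1]].
exists (c1 + c0); split; first by rewrite -ltrBrDr.
move=> x hx; have := Hc0 x hx; have := Hc1 x hx.
rewrite /pK !(T_sub HdataK hx (FT_dom _ m) (FT_dom _ m)) => H1 H0.
have -> : TK m (sval g') x - TK m (sval g) x =
   (TK m (sval g') x - TK m (sval h) x) + (TK m (sval h) x - TK m (sval g) x).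
  by rewrite addrA subrK.
apply: le_trans (lerD H1 H0).
rewrite -mulrDl; apply: ler_wpM2r; first exact: Hnu0.
exact: ler_normD.
Qed.


Hypothesis HKfrak : forall K1 K2, Kfrak K1 -> Kfrak K2 -> Kfrak (K1 `|` K2).

Lemma compact_union (B1 B2 B : set FT) : FV_compact B1 -> FV_compact B2 ->
  (forall f, B f <-> B1 f \/ B2 f) -> FV_compact B.
Proof.
move=> c1 c2 hB F Fo Fc.
have [n1 [U1 [hU1 cU1]]] := c1 F Fo (fun f h => Fc f (proj2 (hB f) (or_introl h))).
have [n2 [U2 [hU2 cU2]]] := c2 F Fo (fun f h => Fc f (proj2 (hB f) (or_intror h))).
exists (n1 + n2)%N, (fun k => if (k < n1)%N then U1 k else U2 (k - n1)%N); split.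
  move=> k hk; case: ifP => h1; first exact: hU1.
  apply: hU2; rewrite ltn_subLR //; rewrite leqNgt h1 //.
move=> f /hB [/cU1 [k [hk Hk]]|/cU2 [k [hk Hk]]].
  by exists k; rewrite hk; split => //; apply: ltn_addr.
exists (n1 + k)%N; rewrite ltn_add2l hk ltnNge leq_addr /= addKn; split => //.
Qed.

Lemma compact_bigunion (n : nat) (Bs : nat -> set FT) :
  (forall k, (k < n)%N -> FV_compact (Bs k)) ->
  FV_compact (fun f => exists k, (k < n)%N /\ Bs k f).
Proof.
elim: n => [|n IH] hc.
  move=> F _ _; exists 0%N, (fun _ => set0); split => // f [k [hk _]] //.
apply: (compact_union (IH (fun k hk => hc k (ltnW hk))) (hc n (ltnSn n))).
move=> f; split.
  move=> [k [hk Hk]]; move: hk; rewrite ltnS leq_eqVlt => /orP [/eqP Ek|hk].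
    by right; rewrite -Ek.
  by left; exists k.
case=> [[k [hk Hk]]|h]; first by exists k; split => //; apply: ltnW.
by exists n.
Qed.

Lemma cover_balls (B : set FT) j m (r : K) : FV_compact B -> 0 < r ->
  (exists f0, B f0) ->
  exists L (gs : nat -> FT), (forall l, (l < L)%N -> B (gs l)) /\
    forall f, B f -> exists l, (l < L)%N /\ ball j m (gs l) r f.
Proof.
move=> cB hr [f0 hf0].
pose F := fun U : set FT => exists g, B g /\ U = ball j m g r.
have Fo : forall U, F U -> FV_open U.
  by move=> U [g [_ ->]]; apply: ball_open.
have Fc : forall f, B f -> exists U, F U /\ U f.
  move=> f hf; exists (ball j m f r); split; first by exists f.
  exact: ball_center.
have [L [Us [hUs cUs]]] := cB F Fo Fc.
have hg : forall l, exists g : FT, (l < L)%N -> B g /\ Us l = ball j m g r.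
  move=> l; case: (ltnP l L) => hl; last by exists f0.
  by have [g [hg ->]] := hUs l hl; exists g.
have [gs Hgs] := choice hg.
exists L, gs; split; first by move=> l hl; case: (Hgs l hl).
move=> f hf; have [l [hl Hl]] := cUs f hf; exists l; split => //.
by case: (Hgs l hl) => _ <-.
Qed.

Lemma unifAP (B : set FT) : FV_compact B -> forall d : K, 0 < d -> forall j m,
  exists Kc, Kfrak Kc /\ forall f, B f -> forall x, omega m x -> ~ Kc (pi x) ->
    `|nu j m x * TK m (sval f) x| < d.
Proof.
move=> cB d hd j m.
have hd2 := half_gt0 hd.
have [Kc0 [hKc0 _]] := proj2 HAP0 1 ltr01 j m tt.
case: (pselect (exists f0, B f0)) => hB; last first.
  by exists Kc0; split => // f hf; case: hB; exists f.
have [L [gs [hgs cgs]]] := cover_balls j m cB hd2 hB.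
have hK : forall n, exists Kc, Kfrak Kc /\ forall l, (l < n)%N -> forall x, omega m x ->
   ~ Kc (pi x) -> `|nu j m x * TK m (sval (gs l)) x| < d / 2.
  elim=> [|n [Kc [hKc IH]]]; first by exists Kc0.
  have [_ H] := FT_AP (gs n).
  have [Kn [hKn [[c [hc Hc]] _]]] := H (d / 2) hd2 j m tt.
  exists (Kc `|` Kn); split; first exact: HKfrak.
  move=> l; rewrite ltnS leq_eqVlt => /orP [/eqP ->|hl] x hx hnot.
    have := Hc x hx (fun h => hnot (or_intror h)); rewrite /pK => h.
    rewrite normrM (ger0_norm (Hnu0 j hx)) mulrC.
    exact: le_lt_trans h hc.
  exact: IH hl x hx (fun h => hnot (or_introl h)).
have [Kc [hKc HK]] := hK L.
exists Kc; split => // f hf x hx hnot.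
have [l [hl Hl]] := cgs f hf.
have E := ball_est Hl hx.
have G := HK l hl x hx hnot.
rewrite -(subrK (nu j m x * TK m (sval (gs l)) x) (nu j m x * TK m (sval f) x)).
rewrite [d]splitr; apply: le_lt_trans (ler_normD _ _) _.
exact: ltrD.
Qed.

Lemma tbB (B : set FT) : FV_compact B -> forall e : K, 0 < e -> forall j m,
  exists N (xs : nat -> W), (forall k, (k < N)%N -> omega m (xs k)) /\
    forall x, omega m x -> exists k, (k < N)%N /\ forall f, B f ->
      `|nu j m x * TK m (sval f) x - nu j m (xs k) * TK m (sval f) (xs k)| < e.
Proof.
move=> cB e he j m.
have he2 := half_gt0 he; have he4 := half_gt0 he2.
have [x0 hx0] := Homega m.
case: (pselect (exists f0, B f0)) => hB; last first.
  exists 1%N, (fun _ => x0); split => // x hx; exists 0%N; split => // f hf.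
  by case: hB; exists f.
have [L [gs [hgs cgs]]] := cover_balls j m cB he4 hB.
have [N [xs [hxs Hxs]]] := @tb_family K W (omega m) x0 hx0
  (fun l x => nu j m x * TK m (sval (gs l)) x) L
  (fun l _ => @img_pc _ j m (FT_AP (gs l))) _ he2.
exists N, xs; split => // x hx.
have [k [hk Hk]] := Hxs x hx; exists k; split => // f hf.
have [l [hl Hl]] := cgs f hf.
have E1 := ball_est Hl hx.
have E2 := ball_est Hl (hxs k hk).
have E3 := Hk l hl.
set a := nu j m x * TK m (sval f) x.
set b := nu j m x * TK m (sval (gs l)) x.
set a' := nu j m (xs k) * TK m (sval f) (xs k).
set b' := nu j m (xs k) * TK m (sval (gs l)) (xs k).
rewrite -/a -/b in E1; rewrite -/a' -/b' in E2; rewrite /= -/b -/b' in E3.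
have -> : a - a' = (a - b) + ((b - b') + (b' - a')).
  by rewrite !addrA !subrK.
have Ee : e / 2 / 2 + (e / 2 + e / 2 / 2) = e.
  by rewrite addrCA -(splitr (e / 2)) -splitr.
rewrite -Ee; apply: le_lt_trans (ler_normD _ _) _.
apply: ltrD => //.
apply: le_lt_trans (ler_normD _ _) _.
by apply: ltrD => //; rewrite distrC.
Qed.

End FVK.

Lemma lt_scale (K : numFieldType) (C t : K) : 0 <= C -> 0 < t -> C * (t / (C + 1)) < t.
Proof.
move=> hC ht.
have hC1 : 0 < C + 1 by apply: lt_le_trans (ltr01) _; rewrite lerDr.
have hq : 0 < t / (C + 1) by rewrite divr_gt0.
apply: (@lt_le_trans _ _ ((C + 1) * (t / (C + 1)))).
  by rewrite ltr_pM2r // ltrDl ltr01.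
by rewrite mulrC divfK // gt_eqF.
Qed.

Section Dual.
Variables (K : numFieldType) (Omega J M W : Type) (omega : M -> set W)
  (nu : J -> M -> W -> K)
  (APK : set (Omega -> K^o)) (domTK : M -> set (Omega -> K^o))
  (TK : M -> (Omega -> K^o) -> W -> K^o).
Hypothesis HdataK : FV_data_ok omega APK domTK TK.
Hypothesis Hnu0 : forall j m x, omega m x -> 0 <= nu j m x.
Hypothesis Hnu : forall m x, omega m x -> exists j, 0 < nu j m x.

Local Notation FT := (FVt omega nu APK domTK TK).
Local Notation dual := (in_FVdual omega nu APK domTK TK).

Lemma FTd (h : FT) m : domTK m (sval h).
Proof. by case: (proj2_sig h) => _ [H _]. Qed.

Lemma dual_zero (jm0 : J * M) : dual (fun _ => 0).
Proof.
split; first by move=> *; rewrite mulr0 addr0.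
by exists 0%N, (fun _ => jm0), 0; split => // f c _; rewrite normr0 mul0r.
Qed.

Lemma dual_comb (c : K) y1 y2 : dual y1 -> dual y2 -> dual (fun f => c * y1 f + y2 f).
Proof.
move=> [l1 [n1 [ix1 [C1 [hC1 H1]]]]] [l2 [n2 [ix2 [C2 [hC2 H2]]]]]; split.
  move=> c' f g h E; rewrite (l1 c' f g h E) (l2 c' f g h E); ring.
exists (n1 + n2)%N, (fun k => if (k < n1)%N then ix1 k else ix2 (k - n1)%N),
  (`|c| * C1 + C2); split.
  by rewrite addr_ge0 // mulr_ge0.
move=> f c0 Hf.
have B1 : `|y1 f| <= C1 * c0.
  apply: H1 => k hk; have := Hf k (ltn_addr _ hk); by rewrite hk.
have B2 : `|y2 f| <= C2 * c0.
  apply: H2 => k hk; have := Hf (n1 + k)%N; rewrite ltn_add2l hk ltnNge leq_addr /= addKn.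
  by apply.
apply: le_trans (ler_normD _ _) _; rewrite normrM mulrDl -mulrA.
by apply: lerD => //; apply: ler_wpM2l.
Qed.

Lemma Phi_dual j m x : omega m x -> dual (fun f => nu j m x * TK m (sval f) x).
Proof.
move=> hx; split.
  move=> c f g h ->; case: HdataK => _ [_ HL].
  rewrite (HL m c (sval f) (sval g) (FTd f m) (FTd g m) x hx) /=.
  have E (a b d : K) : a * (c * b + d) = c * (a * b) + a * d by rewrite mulrDr mulrCA.
  exact: E.
exists 1%N, (fun _ => (j, m)), 1; split => // f c /(_ 0%N isT) /= H.
have := H x hx; rewrite /pK mul1r normrM (ger0_norm (Hnu0 j hx)) mulrC //.
Qed.

Lemma TKx_dual m x : omega m x -> dual (TKx omega nu APK domTK TK m x).
Proof.
move=> hx; have [j hj] := Hnu hx; split.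
  move=> c f g h; rewrite /TKx => ->; case: HdataK => _ [_ HL].
  by rewrite (HL m c (sval f) (sval g) (FTd f m) (FTd g m) x hx).
exists 1%N, (fun _ => (j, m)), (nu j m x)^-1; split.
  by rewrite invr_ge0 ltW.
move=> f c /(_ 0%N isT) /= H.
rewrite /TKx mulrC.
by have := H x hx; rewrite /pK -ler_pdivlMr.
Qed.
End Dual.

Section SN.
Variables (K : numFieldType) (V : lmodType K) (A : Type) (p : A -> V -> K).
Hypothesis Hs : seminorm_family p.

Lemma sn_ge0 a x : 0 <= p a x. Proof. by case: (Hs a). Qed.
Lemma sn_tri a x y : p a (x + y) <= p a x + p a y. Proof. by case: (Hs a) => _ []. Qed.
Lemma sn_scale a (c : K) x : p a (c *: x) = `|c| * p a x. Proof. by case: (Hs a) => _ []. Qed.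

Lemma directed_comb (Hd : directed_family p) n (as_ : nat -> A) :
  exists a (C : K), 0 < C /\ forall i, (i <= n)%N -> forall x, p (as_ i) x <= C * p a x.
Proof.
elim: n => [|n [a [C [hC IH]]]].
  exists (as_ 0%N), 1; split => // i; rewrite leqn0 => /eqP -> x; by rewrite mul1r.
have [a3 [C3 [hC3 H3]]] := Hd a (as_ n.+1).
exists a3, (C * C3 + C3); split; first by rewrite addr_gt0 // mulr_gt0.
have h0 x : 0 <= C3 * p a3 x by apply: mulr_ge0; [apply: ltW | apply: sn_ge0].
move=> i; rewrite leq_eqVlt => /orP [/eqP -> x|hi x].
  apply: le_trans (proj2 (H3 x)) _; rewrite mulrDl lerDr -mulrA.
  by apply: mulr_ge0; [apply: ltW | apply: h0].
apply: le_trans (IH i hi x) _.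
apply: le_trans (ler_wpM2l (ltW hC) (proj1 (H3 x))) _.
by rewrite mulrDl mulrA lerDl.
Qed.

Lemma dual_lin0 (e' : V -> K) : in_dual p e' -> e' 0 = 0.
Proof.
case=> lin _; have h := lin 1 0 0; rewrite scaler0 addr0 mul1r in h.
by move: h; rewrite -{1}[e' 0]addr0 => /addrI ->.
Qed.

Lemma dual_scale (e' : V -> K) c x : in_dual p e' -> e' (c *: x) = c * e' x.
Proof.
move=> he; have := (proj1 he) c x 0; rewrite addr0 (dual_lin0 he) addr0 //.
Qed.

Lemma dual_sub (e' : V -> K) x y : in_dual p e' -> e' (x - y) = e' x - e' y.
Proof.
move=> he; have := (proj1 he) (-1) y x; rewrite scaleN1r addrC => ->.
by rewrite mulN1r addrC.
Qed.

Lemma dual_bound (e' : V -> K) (a0 : A) (Hd : directed_family p) :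
  in_dual p e' -> exists a (D : K), 0 <= D /\ forall y, `|e' y| <= D * p a y.
Proof.
case=> _ [n [as_ [C0 [hC0 H]]]].
case: n H => [|n] H.
  exists a0, 0; split => // y; rewrite mul0r.
  by have := H y 0 (fun i hi => False_ind _ (notF hi)); rewrite mulr0.
have [a [C [hC HC]]] := directed_comb Hd n as_.
exists a, (C0 * C); split; first by apply: mulr_ge0 => //; apply: ltW.
move=> y; rewrite -mulrA; apply: H => i hi; exact: HC.
Qed.
End SN.

Theorem proposition4p13
  (* the scalar field K = R or C *)
  (K : numFieldType) (HK : RorC K)
  (* E: non-trivial Hausdorff lcs with directed fundamental system (pE a) *)
  (E : lmodType K) (AE : Type) (pE : AE -> E -> K)
  (HE : seminorm_family pE /\ directed_family pE /\ separating_family pE /\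
        exists x : E, x <> 0)
  (* weights *)
  (Omega J M W : Type) (HJ : inhabited J) (HM : inhabited M)
  (omega : M -> set W) (Homega : forall m, exists x, omega m x)
  (nu : J -> M -> W -> K)
  (Hnu0 : forall j m x, omega m x -> 0 <= nu j m x)
  (Hnu : forall m x, omega m x -> exists j, 0 < nu j m x)
  (* Y = K *)
  (APK : set (Omega -> K^o)) (domTK : M -> set (Omega -> K^o))
  (TK : M -> (Omega -> K^o) -> W -> K^o)
  (HdataK : FV_data_ok omega APK domTK TK)
  (* Y = E *)
  (APE : set (Omega -> E)) (domTE : M -> set (Omega -> E))
  (TE : M -> (Omega -> E) -> W -> E)
  (HdataE : FV_data_ok omega APE domTE TE)
  (* generator: FV(Omega) and FV(Omega,E) are dom-spaces *)
  (HdomK : FV_separating omega nu (@pK K) APK domTK TK /\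
           FV_directed omega nu (@pK K) APK domTK TK /\
           forall x : Omega, in_FVdual omega nu APK domTK TK
                               (delta omega nu APK domTK TK x))
  (HdomE : FV_separating omega nu pE APE domTE TE /\
           FV_directed omega nu pE APE domTE TE)
  (* X, the family Kfrak closed under finite unions, pi *)
  (X : Type) (Kfrak : set (set X))
  (HKfrak : forall K1 K2, Kfrak K1 -> Kfrak K2 -> Kfrak (K1 `|` K2))
  (pi : W -> X)
  (* FV(Omega,Y) is a linear subspace of AP_{pi,Kfrak}(Omega,Y) *)
  (HAPK : linear_subspace (APpi omega nu (@pK K) domTK TK pi Kfrak) /\
          forall f, inFV omega nu (@pK K) APK domTK TK f ->
                    APpi omega nu (@pK K) domTK TK pi Kfrak f)
  (HAPE : linear_subspace (APpi omega nu pE domTE TE pi Kfrak) /\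
          forall f, inFV omega nu pE APE domTE TE f ->
                    APpi omega nu pE domTE TE pi Kfrak f) :
  (* (1) *)
  ((forall u, in_eps omega nu APK domTK TK pE u ->
      forall m, domTE m (Smap omega nu APK domTK TK u) /\
        forall x, omega m x ->
          TE m (Smap omega nu APK domTK TK u) x =
          u (TKx omega nu APK domTK TK m x)) ->
   forall u, in_eps omega nu APK domTK TK pE u ->
     APpi omega nu pE domTE TE pi Kfrak (Smap omega nu APK domTK TK u))
  /\
  (* (2) *)
  ((forall e' : E -> K, in_dual pE e' ->
      forall f, inFV omega nu pE APE domTE TE f ->
      forall m, domTK m (e' \o f) /\
        forall x, omega m x -> TK m (e' \o f) x = e' (TE m f x)) ->
   forall (e' : E -> K) (f : Omega -> E), in_dual pE e' ->
     inFV omega nu pE APE domTE TE f ->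
     APpi omega nu (@pK K) domTK TK pi Kfrak (e' \o f)).
Proof.
case: HE => HsE [HdE [HsepE [x1 hx1]]].
case: HJ => j0; case: HM => m0.
have HAPK0 := proj1 (proj1 HAPK).
have Z : in_FVdual omega nu APK domTK TK (fun _ => 0) := @dual_zero _ _ _ _ _ omega nu APK domTK TK (j0, m0).
split.
- move=> Hyp1 u hu; have [ulin ubd] := hu.
  have HS m := Hyp1 u hu m.
  have u0 : u (fun _ => 0) = 0.
    have := ulin 1 _ _ Z Z.
    have -> : (fun f : FVt omega nu APK domTK TK => 1 * 0 + 0) = (fun _ => 0 : K).
      by apply: funext => f; rewrite mulr0 addr0.
    rewrite scale1r; move/eqP; rewrite -{1}[u _]addr0 eq_sym => /eqP /addrI //.
  have uPhi x' : omega m0 x' -> True by [].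
  have uPhi2 m x' : omega m x' -> u (fun f => nu j0 m x' * TK m (sval f) x') = u (fun f => nu j0 m x' * TK m (sval f) x') by [].
  split; first by move=> m; case: (HS m).
  move=> eps heps j m a.
  have uP x' : omega m x' -> u (fun f => nu j m x' * TK m (sval f) x') =
       nu j m x' *: u (TKx omega nu APK domTK TK m x').
    move=> hx'; have := ulin (nu j m x') _ _ (TKx_dual HdataK Hnu hx') Z.
    rewrite u0 addr0 => <-; congr u; apply: funext => f; by rewrite addr0.
  have [nB [Bs [C [hBs [hC HC]]]]] := ubd a.
  have cB := compact_bigunion (fun k hk => proj2 (hBs k hk)).
  have hC1 : 0 < C + 1 by apply: lt_le_trans (ltr01) _; rewrite lerDr.
  have hd : 0 < eps / (C + 1) by rewrite divr_gt0.
  have [Kc [hKc HKc]] := unifAP HdataK Hnu0 (proj2 HAPK) HAPK0 HKfrak cB hd j m.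
  exists Kc; split => //; split.
    exists (C * (eps / (C + 1))); split; first exact: lt_scale.
    move=> x hx hnot; rewrite (proj2 (HS m) x hx).
    have := Hnu0 j m x hx; rewrite le_eqVlt => /orP [/eqP <-|hpos].
      by rewrite mulr0; apply: mulr_ge0 => //; apply: ltW.
    have Hb := HC (TKx omega nu APK domTK TK m x) (eps / (C + 1) / nu j m x)
                 (TKx_dual HdataK Hnu hx).
    rewrite -ler_pdivlMr // -mulrA; apply: Hb => k f hk hf.
    have := HKc f (ex_intro _ k (conj hk hf)) x hx hnot.
    rewrite normrM (gtr0_norm hpos) /TKx => h.
    by rewrite ler_pdivlMr // mulrC ltW.
  move=> n as_ e he.
  case: n as_ => [|n] as_.
    by exists 1%N, (fun _ => 0) => y _; exists 0%N; split => // i; rewrite ltn0.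
  have [a0 [C0 [hC0 HC0]]] := directed_comb HsE HdE n as_.
  have [nB' [Bs' [C' [hBs' [hC' HC']]]]] := ubd a0.
  have cB' := compact_bigunion (fun k hk => proj2 (hBs' k hk)).
  have hC1' : 0 < C' + 1 by apply: lt_le_trans (ltr01) _; rewrite lerDr.
  have ht : 0 < e / C0 by rewrite divr_gt0.
  have heta : 0 < e / C0 / (C' + 1) by rewrite divr_gt0.
  have [N [xs [hxs Hxs]]] := tbB HdataK Hnu0 (proj2 HAPK) Homega cB' heta j m.
  exists N, (fun k => nu j m (xs k) *: u (TKx omega nu APK domTK TK m (xs k))).
  move=> y [x [hx [_ ->]]].
  have [k [hk Hk]] := Hxs x hx; exists k; split => // i hi.
  rewrite (proj2 (HS m) x hx) -(uP _ hx) -(uP _ (hxs k hk)).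
  have P1 := Phi_dual HdataK Hnu0 j (hxs k hk).
  have P2 := Phi_dual HdataK Hnu0 j hx.
  have Dd := dual_comb (-1) P1 P2.
  have -> : u (fun f => nu j m x * TK m (sval f) x) -
            u (fun f => nu j m (xs k) * TK m (sval f) (xs k)) =
            u (fun f => -1 * (nu j m (xs k) * TK m (sval f) (xs k)) +
                        nu j m x * TK m (sval f) x).
    by rewrite ulin ?scaleN1r 1?addrC.
  apply: le_lt_trans (HC0 i hi _) _.
  have hb := HC' _ (e / C0 / (C' + 1)) Dd.
  have hb' : pE a0 (u (fun f => -1 * (nu j m (xs k) * TK m (sval f) (xs k)) +
                        nu j m x * TK m (sval f) x)) <= C' * (e / C0 / (C' + 1)).
    apply: hb => k' f hk' hf.
    have := Hk f (ex_intro _ k' (conj hk' hf)).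
    by rewrite mulN1r addrC => /ltW.
  apply: le_lt_trans (ler_wpM2l (ltW hC0) hb') _.
  apply: (@lt_le_trans _ _ (C0 * (e / C0))).
    by rewrite ltr_pM2l //; apply: lt_scale.
  by rewrite mulrC divfK // gt_eqF.
- move=> Hyp2 e' f he' hf.
  have [a0 _] : exists a : AE, True.
    case: (pselect (exists a : AE, True)) => // hno; exfalso; apply: hx1.
    by apply: HsepE => a; case: hno; exists a.
  have [a [D [hD HD]]] := dual_bound HsE a0 HdE he'.
  have HT m := Hyp2 e' he' f hf m.
  split; first by move=> m; case: (HT m).
  move=> eps heps j m [].
  have [_ Hf] := proj2 HAPE f hf.
  have hD1 : 0 < D + 1 by apply: lt_le_trans (ltr01) _; rewrite lerDr.
  have heta : 0 < eps / (D + 1) by rewrite divr_gt0.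
  have [Kc [hKc [[c [hc Hc]] Hpc]]] := Hf _ heta j m a.
  exists Kc; split => //; split.
    exists ((D + 1) * c); split.
      have -> : eps = (D + 1) * (eps / (D + 1)) by rewrite mulrC divfK // gt_eqF.
      by rewrite ltr_pM2l.
    move=> x hx hnot; rewrite /pK (proj2 (HT m) x hx) /=.
    have h := Hc x hx hnot.
    have c0 : 0 <= c := le_trans (mulr_ge0 (sn_ge0 HsE _ _) (Hnu0 j m x hx)) h.
    apply: le_trans (_ : D * pE a (TE m f x) * nu j m x <= _).
      by apply: ler_wpM2r; [exact: Hnu0 | exact: HD].
    rewrite -mulrA; apply: le_trans (ler_wpM2l hD h) _.
    by rewrite mulrDl mul1r lerDl.
  move=> n as_ e he.
  have ht : 0 < e / (D + 1) by rewrite divr_gt0.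
  have [N [z Hz]] := Hpc 1%N (fun _ => a) _ ht.
  exists N, (fun k => e' (z k)).
  move=> y [x [hx [hK ->]]].
  have [k [hk Hk]] := Hz (nu j m x *: TE m f x) (ex_intro _ x (conj hx (conj hK erefl))).
  exists k; split => // i hi; rewrite /pK (proj2 (HT m) x hx) /=.
  have -> : nu j m x *: (e' (TE m f x) : K^o) = e' (nu j m x *: TE m f x).
    by rewrite (dual_scale _ _ he').
  rewrite -(dual_sub _ _ he'); apply: le_lt_trans (HD _) _.
  have hk' := Hk 0%N isT.
  apply: (@le_lt_trans _ _ ((D + 1) * pE a (nu j m x *: TE m f x - z k))).
    by rewrite mulrDl mul1r lerDl (sn_ge0 HsE).
  have -> : e = (D + 1) * (e / (D + 1)) by rewrite mulrC divfK // gt_eqF.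
  by rewrite ltr_pM2l.
Qed.
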